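(* Let $\mathfrak F$ be a Frankenstein graph and let $\mathsf P\subseteq\mathfrak F$ be a path with terminals $s$ and $t$. Then there exists a rainbow path $\mathsf P'\subseteq\mathfrak F$ with terminals $s$ and $t$.
   Context: A (colored) graph is a finite set $\mathsf G$ of pairs $(e,\alpha)$, where the $e$'s are pairwise distinct 2-element subsets of a vertex set and $\alpha$ is a color (colors may repeat). $V(\mathsf G)$ is its vertex set and $\chi(\mathsf G)$ its set of colors; $\mathsf G$ is rainbow if $|\chi(\mathsf G)|=|\mathsf G|$ and almost rainbow if $|\chi(\mathsf G)|=|\mathsf G|-1$. A subgraph is a subset. Paths, cycles, trees are colored graphs whose underlying uncolored edges form a path (two distinct terminals), cycle, or tree; lengths count edges. A long rainbow odd cycle is a rainbow cycle of odd length at least $7$. A theta graph is a union $\mathsf P_1\cup\mathsf P_2\cup\mathsf P_3$ of three paths with the same terminals $s\neq t$ such that any two share no vertex other than $s,t$ and no underlying uncolored edge. A bad piece is an almost rainbow theta graph with at least $6$ vertices that is the union of three rainbow paths as in the definition of a theta graph. A partition of a graph $\mathsf G$ is a collection $\{\mathsf G_1,\dots,\mathsf G_m\}$ of graphs with $\mathsf G=\bigcup_i\mathsf G_i$ and, for $i\ne j$, $|V(\mathsf G_i)\cap V(\mathsf G_j)|\le 1$ and $\chi(\mathsf G_i)\cap\chi(\mathsf G_j)=\emptyset$; its members are called parts. A Frankenstein graph is a graph $\mathfrak F$ together with a partition $\{\mathsf C_1,\dots,\mathsf C_c,\mathsf B_1,\dots,\mathsf B_b,\mathsf T_1,\dots,\mathsf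 T_t\}$ ($c,b,t\ge0$, $c+b+t\ge1$) in which the $\mathsf C_i$ are long rainbow odd cycles, the $\mathsf B_i$ are bad pieces and the $\mathsf T_i$ are rainbow trees, such that (F1) $V(\mathsf T_p)\cap V(\mathsf T_q)=\emptyset$ for $p\neq q$, and (F2) no subgraph of $\mathfrak F$ is a rainbow even cycle. *)

(* Defs.v *)
From mathcomp Require Import all_boot.
Set Implicit Arguments. Unset Strict Implicit. Unset Printing Implicit Defensive.

Section ColoredGraphs.
Variables (V C : finType).

(* A colored graph: a finite set of pairs (e, alpha), e a 2-element vertex set. *)
Definition cgraph := {set ({set V} * C)}.

Definition edges (G : cgraph) : {set {set V}} := [set p.1 | p in G].
Definition vertices (G : cgraph) : {set V} := \bigcup_(p in G) p.1.
Definition colors (G : cgraph) : {set C} := [set p.2 | p in G].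

Definition is_graph (G : cgraph) : bool :=
  [forall p in G, #|p.1| == 2] &&
  [forall p in G, forall q in G, (p.1 == q.1) ==> (p == q)].

Definition rainbow (G : cgraph) : bool := #|colors G| == #|G|.
Definition almost_rainbow (G : cgraph) : bool := #|colors G|.+1 == #|G|.

Definition seq_edges (x : V) (p : seq V) : {set {set V}} :=
  [set [set e.1; e.2] | e in zip (x :: p) p].

Definition is_path (G : cgraph) (s t : V) : Prop :=
  is_graph G /\
  exists p : seq V, [/\ p != [::], uniq (s :: p), last s p = t &
                        edges G = seq_edges s p].

Definition is_cycle (G : cgraph) : Prop :=
  is_graph G /\
  exists (x : V) (p : seq V), [/\ 2 <= size p, uniq (x :: p) &
                                  edges G = seq_edges x (rcons p x)].

Definition adj (G : cgraph) : rel V := fun u v => [set u; v] \in edges G.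

Definition connected (G : cgraph) : Prop :=
  forall u v, u \in vertices G -> v \in vertices G -> connect (adj G) u v.

Definition is_tree (G : cgraph) : Prop :=
  [/\ is_graph G, connected G & forall H : cgraph, H \subset G -> ~ is_cycle H].

Definition long_rainbow_odd_cycle (G : cgraph) : Prop :=
  [/\ is_cycle G, rainbow G, odd #|G| & 7 <= #|G|].

Definition no_common_edge (G H : cgraph) : Prop := edges G :&: edges H = set0.

(* bad piece: almost rainbow theta graph on >= 6 vertices, union of three
   rainbow paths as in the definition of a theta graph *)
Definition bad_piece (B : cgraph) : Prop :=
  exists (P1 P2 P3 : cgraph) (s t : V),
    [/\ s != t, is_path P1 s t, is_path P2 s t & is_path P3 s t] /\
    [/\ rainbow P1, rainbow P2 & rainbow P3] /\
    [/\ vertices P1 :&: vertices P2 \subset [set s; t],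
        vertices P1 :&: vertices P3 \subset [set s; t] &
        vertices P2 :&: vertices P3 \subset [set s; t]] /\
    [/\ no_common_edge P1 P2, no_common_edge P1 P3 & no_common_edge P2 P3] /\
    [/\ B = P1 :|: P2 :|: P3, is_graph B, almost_rainbow B & 6 <= #|vertices B|].

Definition is_partition (F : cgraph) (parts : seq cgraph) : Prop :=
  F = \bigcup_(X <- parts) X /\
  forall i j, i < size parts -> j < size parts -> i != j ->
    #|vertices (nth set0 parts i) :&: vertices (nth set0 parts j)| <= 1 /\
    colors (nth set0 parts i) :&: colors (nth set0 parts j) = set0.

Definition rainbow_even_cycle (G : cgraph) : Prop :=
  [/\ is_cycle G, rainbow G & ~~ odd #|G|].

Definition frankenstein (F : cgraph) (Cs Bs Ts : seq cgraph) : Prop :=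
  [/\ is_graph F, is_partition F (Cs ++ Bs ++ Ts),
      1 <= size (Cs ++ Bs ++ Ts) &
      [/\ forall X, X \in Cs -> long_rainbow_odd_cycle X,
          forall X, X \in Bs -> bad_piece X &
          forall X, X \in Ts -> is_tree X /\ rainbow X]] /\
  (forall p q, p < size Ts -> q < size Ts -> p != q ->
     vertices (nth set0 Ts p) :&: vertices (nth set0 Ts q) = set0) /\
  (forall H : cgraph, H \subset F -> ~ rainbow_even_cycle H).

End ColoredGraphs.

(* Main.v *)
Require Import Defs.
From mathcomp Require Import all_boot.
Set Implicit Arguments. Unset Strict Implicit.

Lemma memzip (T : eqType) (s t : seq T) ab : ab \in zip s t -> ab.1 \in s /\ ab.2 \in t.
Proof.
elim: s t => [|x s IH] [|y t] //= /predU1P[->|/IH[h1 h2]].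
  by rewrite /= !mem_head.
by rewrite !inE h1 h2 !orbT.
Qed.

Lemma path_zip (T : eqType) (r : rel T) s p :
  path r s p -> forall ab, ab \in zip (s :: p) p -> r ab.1 ab.2.
Proof.
elim: p s => [|y p IH] s //= /andP[rsy pp] ab /predU1P[->//|].
exact: IH.
Qed.

Lemma zip_path (T : eqType) (r : rel T) s p :
  (forall ab, ab \in zip (s :: p) p -> r ab.1 ab.2) -> path r s p.
Proof.
elim: p s => [|y p IH] s //= H; rewrite (H (s, y)) ?mem_head //=.
by apply: IH => ab hab; apply: H; rewrite /= inE hab orbT.
Qed.

Lemma chain_connect (T : finType) (r : rel T) s p :
  (forall ab, ab \in zip (s :: p) p -> connect r ab.1 ab.2) -> connect r s (last s p).
Proof.
elim: p s => [|y p IH] s H /=; first exact: connect0.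
apply: connect_trans (H (s, y) (mem_head _ _)) (IH y _).
by move=> ab hab; apply: H; rewrite /= inE hab orbT.
Qed.

Lemma L2 (T : finType) (r : rel T) (E : {set T}) s p :
  uniq (s :: p) ->
  (forall ab, ab \in zip (s :: p) p -> [set ab.1; ab.2] != E -> r ab.1 ab.2) ->
  forall ab, ab \in zip (s :: p) p -> [set ab.1; ab.2] = E ->
  connect r s ab.1 /\ connect r ab.2 (last s p).
Proof.
elim: p s => [|y p IH] s //= /andP[sn up] H ab /predU1P[->|hab] /= hE.
  split; first exact: connect0.
  apply/connectP; exists p => //; apply: zip_path => cd hcd; apply: H.
    by rewrite /= inE hcd orbT.
  rewrite -hE; apply/negP => /eqP he.
  have := set21 s y; rewrite -he => /set2P[]; move: (memzip hcd) => [h1 h2].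
    by move=> e; move: sn; rewrite e h1.
  by move=> e; move: sn; rewrite e inE h2 orbT.
have [c1 c2] : connect r y ab.1 /\ connect r ab.2 (last y p).
  by apply: IH => // cd hcd; apply: H; rewrite /= inE hcd orbT.
split => //; apply: connect_trans c1; apply: connect1; apply: (H (s, y)).
  exact: mem_head.
rewrite /= -hE; apply/negP => /eqP he.
have := set21 s y; rewrite he => /set2P[] e; move: (memzip hab) => [h1 h2].
  by move: sn; rewrite e h1.
by move: sn; rewrite e inE h2 orbT.
Qed.

Section S.
Variables (V C : finType).
Implicit Types (G B Pa Pb : cgraph V C).

Lemma adj_sym G : symmetric (adj G).
Proof. by move=> u v; rewrite /adj setUC. Qed.

Lemma in_edges G x : x \in G -> x.1 \in edges G.
Proof. by move=> h; apply: imset_f. Qed.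

Lemma edgesP G e : reflect (exists2 x, x \in G & e = x.1) (e \in edges G).
Proof. exact: imsetP. Qed.

Lemma nce_notin G K x : no_common_edge G K -> x \in G -> x \notin K.
Proof.
move=> h xG; apply/negP => xK.
have : x.1 \in edges G :&: edges K by rewrite inE !in_edges.
by rewrite h inE.
Qed.

Lemma theta_conn B Pa Pb x s t :
  is_path Pa s t -> is_path Pb s t -> Pa \subset B -> Pb \subset B ->
  x \in Pa -> x \notin Pb ->
  forall u v, u \in x.1 -> v \in x.1 -> connect (adj (B :\ x)) u v.
Proof.
move=> [_ [pa [_ ua la ea]]] [_ [pb [_ _ lb eb]]] sa sb xa xb.
set r := adj (B :\ x).
have csym := sym_connect_sym (adj_sym (B :\ x)).
have hx : x.1 \in seq_edges s pa by rewrite -ea in_edges.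
case/imsetP: hx => ab hab hE.
have [c1 c2] : connect r s ab.1 /\ connect r ab.2 (last s pa).
  apply: (L2 (E := x.1) ua) hab (esym hE).
  move=> cd hcd hne.
  have : [set cd.1; cd.2] \in edges Pa by rewrite ea; apply: imset_f.
  case/edgesP => z zP ez; apply/edgesP; exists z => //.
  rewrite !inE (subsetP sa _ zP) andbT; apply/negP => /eqP zx.
  by move: hne; rewrite ez zx hE eqxx.
have cst : connect r s t.
  apply/connectP; exists pb => //; apply: zip_path => cd hcd.
  have : [set cd.1; cd.2] \in edges Pb by rewrite eb; apply: imset_f.
  case/edgesP => z zP ez; apply/edgesP; exists z => //.
  rewrite !inE (subsetP sb _ zP) andbT; apply/negP => /eqP zx.
  by move: xb; rewrite -zx zP.
have cab : connect r ab.1 ab.2.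
  rewrite la in c2.
  apply: (connect_trans (y := s)); first by rewrite csym.
  by apply: (connect_trans cst); rewrite csym.
move=> u v; rewrite hE => /set2P[]-> /set2P[]->; rewrite ?connect0 //.
by rewrite csym.
Qed.
End S.

Lemma in_bigcup (T : finType) (L : seq {set T}) x :
  x \in \bigcup_(X <- L) X -> exists2 i, i < size L & x \in nth set0 L i.
Proof.
elim: L => [|X L IH]; rewrite ?big_nil ?big_cons ?inE // => /orP[h|/IH[i hi h]].
  by exists 0.
by exists i.+1.
Qed.

Lemma mem_bigcup (T : finType) (L : seq {set T}) X x :
  X \in L -> x \in X -> x \in \bigcup_(Y <- L) Y.
Proof.
elim: L => [|Y L IH] //; rewrite big_cons inE => /predU1P[->|h] hx; rewrite inE.
  by rewrite hx.
by rewrite IH ?orbT.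
Qed.

Theorem proposition2p9 (V C : finType) (F : cgraph V C) (Cs Bs Ts : seq (cgraph V C)) :
  frankenstein F Cs Bs Ts ->
  forall (P : cgraph V C) (s t : V), P \subset F -> is_path P s t ->
  exists P' : cgraph V C, [/\ P' \subset F, is_path P' s t & rainbow P'].
Proof.
move=> [[HgF [HFU Hdisj] _ [HC HB HT]] _] P s t PF Pp.
set L := Cs ++ Bs ++ Ts.
have kind : forall X, X \in L -> rainbow X \/ bad_piece X.
  move=> X; rewrite !mem_cat => /orP[h|/orP[h|h]].
  - by left; case: (HC X h).
  - by right; apply: HB.
  - by left; case: (HT X h).
have col : forall i j z w, i < size L -> j < size L -> z \in nth set0 L i ->
    w \in nth set0 L j -> z.2 = w.2 -> i = j.
  move=> i j z w hi hj hz hw e; apply/eqP; apply/negPn/negP => nij.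
  have [_ h] := Hdisj i j hi hj nij.
  have : z.2 \in colors (nth set0 L i) :&: colors (nth set0 L j).
    by rewrite inE imset_f //= e imset_f.
  by rewrite h inE.
have part : forall x, x \in F -> exists2 i, i < size L & x \in nth set0 L i.
  by move=> x; rewrite HFU; apply: in_bigcup.
have partF : forall i z, i < size L -> z \in nth set0 L i -> z \in F.
  by move=> i z hi hz; rewrite HFU; apply: (mem_bigcup (mem_nth set0 hi)).
set H := [set x in F | [forall y in F, (y.2 == x.2) ==> (enum_rank x <= enum_rank y)]].
have Hinj : {in H &, forall x y, x.2 = y.2 -> x = y}.
  move=> x y; rewrite !inE => /andP[xF /forall_inP hx] /andP[yF /forall_inP hy] e.
  apply: enum_rank_inj; apply: val_inj; apply/eqP; rewrite eqn_leq.
  by rewrite (implyP (hx y yF)) ?e // (implyP (hy x xF)) ?e.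
have HF : H \subset F by apply/subsetP => x; rewrite inE => /andP[].
have claimB : forall x u v, x \in F -> u \in x.1 -> v \in x.1 -> connect (adj H) u v.
  move=> x u v xF ux vx; case xH: (x \in H).
    case: (eqVneq u v) => [->|uv]; first exact: connect0.
    apply: connect1; rewrite /adj.
    suff <- : x.1 = [set u; v] by apply: in_edges.
    apply/eqP; rewrite eq_sym eqEcard cards2 uv.
    case/andP: HgF => /forall_inP h2 _; rewrite (eqP (h2 x xF)) leqnn andbT.
    by apply/subsetP => w /set2P[]->.
  move: xH; rewrite inE xF /= => /negbT/forall_inPn [y yF].
  rewrite negb_imply -ltnNge => /andP[/eqP yx ryx].
  have [i hi xi] := part x xF.
  have [j hj yj] := part y yF.
  have ji := col j i y x hj hi yj xi yx; subst j.
  set X := nth set0 L i in xi yj.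
  have XL : X \in L by apply: mem_nth.
  have ynx : y != x by apply/negP => /eqP e; move: ryx; rewrite e ltnn.
  case: (kind X XL) => [rX|bX].
    have hinj : {in X &, injective (fun p : {set V} * C => p.2)}.
      by apply/imset_injP; exact: rX.
    have e : y = x := hinj y x yj xi yx.
    by move: ynx; rewrite e eqxx.
  have yX' : y \in X :\ x by rewrite in_setD1 ynx yj.
  have injX : {in X :\ x &, injective (fun p : {set V} * C => p.2)}.
    apply/imset_injP; rewrite eqn_leq leq_imset_card /=.
    move: bX => [P1 [P2 [P3 [s' [t' [_ [_ [_ [_ [_ _ aX _]]]]]]]]]].
    have cX : #|X| = (#|X :\ x|).+1 by rewrite (cardsD1 x) xi.
    move: aX; rewrite /almost_rainbow cX eqSS => /eqP <-.
    apply: subset_leq_card; apply/subsetP => c /imsetP[p pX ->].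
    case: (eqVneq p x) => [->|pnx].
      by rewrite -yx; apply: imset_f.
    by apply: imset_f; rewrite in_setD1 pnx pX.
  have subH : forall z, z \in X -> z != x -> z \in H.
    move=> z zX znx; rewrite inE (partF i z hi zX) /=.
    apply/forall_inP => w wF; apply/implyP => /eqP wz.
    have [k hk wk] := part w wF.
    have ki := col k i w z hk hi wk zX wz; subst k.
    case: (eqVneq w x) => [wx|wnx].
      have -> : z = y.
        apply: injX => //; first by rewrite in_setD1 znx zX.
        by rewrite -wz wx yx.
      by rewrite wx ltnW.
    have -> : z = w by apply: injX; rewrite ?in_setD1 ?znx ?zX ?wnx ?wk.
    exact: leqnn.
  have sub : subrel (adj (X :\ x)) (connect (adj H)).
    move=> a b /edgesP[z zX ez]; apply: connect1; rewrite /adj ez; apply: in_edges.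
    by move: zX; rewrite in_setD1 => /andP[znx zX]; apply: subH.
  apply: (connect_sub sub).
  move: bX => [P1 [P2 [P3 [s' [t' [[_ p1 p2 p3] [_ [_ [[n12 n13 n23] [XE _ _ _]]]]]]]]]].
  have s1 : P1 \subset X by apply/subsetP => z zz; rewrite XE !inE zz ?orbT.
  have s2 : P2 \subset X by apply/subsetP => z zz; rewrite XE !inE zz ?orbT.
  have s3 : P3 \subset X by apply/subsetP => z zz; rewrite XE !inE zz ?orbT.
  have hx : x \in P1 :|: P2 :|: P3 by rewrite -XE.
  move: hx; rewrite !inE => /orP[/orP[h|h]|h].
  - exact: (theta_conn p1 p2 s1 s2 h (nce_notin n12 h) ux vx).
  - have n21 : no_common_edge P2 P1 by rewrite /no_common_edge setIC.
    exact: (theta_conn p2 p1 s2 s1 h (nce_notin n21 h) ux vx).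
  - have n31 : no_common_edge P3 P1 by rewrite /no_common_edge setIC.
    exact: (theta_conn p3 p1 s3 s1 h (nce_notin n31 h) ux vx).
have cst : connect (adj H) s t.
  case: Pp => _ [p [pn up lp ep]]; rewrite -lp; apply: chain_connect => ab hab.
  have : [set ab.1; ab.2] \in edges P by rewrite ep; apply: imset_f.
  case/edgesP => x xP ex.
  by apply: (claimB x); rewrite ?(subsetP PF _ xP) // -ex ?set21 ?set22.
have snt : s != t.
  case: Pp => _ [[|y p] [//= _ up lp _]].
  rewrite -lp /=; apply/negP => /eqP e; move: up; rewrite /= {1}e.
  by rewrite mem_last.
case/connectP: cst => q pq; case: (shortenP pq) => p' pp' up' _ tq.
have HgH : is_graph H.
  case/andP: HgF => /forall_inP h1 /forall_inP h2; apply/andP; split.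
    by apply/forall_inP => x xH; apply: h1; apply: (subsetP HF).
  apply/forall_inP => x xH; apply/forall_inP => y yH.
  by apply: (forall_inP (h2 x (subsetP HF _ xH))); apply: (subsetP HF).
exists [set z in H | z.1 \in seq_edges s p']; split.
- by apply/subsetP => z; rewrite inE => /andP[zH _]; apply: (subsetP HF).
- split.
    case/andP: HgH => /forall_inP h1 /forall_inP h2; apply/andP; split.
      by apply/forall_inP => x; rewrite inE => /andP[xH _]; apply: h1.
    apply/forall_inP => x; rewrite inE => /andP[xH _].
    by apply/forall_inP => y; rewrite inE => /andP[yH _]; apply: (forall_inP (h2 x xH)).
  exists p'; split => //.
    by apply/eqP => e; move: snt; rewrite tq e eqxx.
  apply/setP => e; apply/edgesP/idP => [[z] | he].
    by rewrite inE => /andP[_ h] ->.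
  case/imsetP: (he) => ab hab ee.
  have := path_zip pp' hab; rewrite /adj -ee => /edgesP[z zH ez].
  by exists z => //; rewrite inE zH -ez he.
- apply/imset_injP => z w /setIdP[zH _] /setIdP[wH _].
  exact: (Hinj z w zH wH).
Qed.
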